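(* Assume $t_m=1$. Then every maximal left special factor of $u_\beta$ contains at least one non-zero letter.
   Context: $\beta>1$ is a simple Parry number with $d_\beta(1)=t_1\cdots t_{m-1}t_m$, $m\ge2$, nonnegative integer digits, $t_1\ge1$, satisfying the Parry condition ($t_i\cdots t_m0^\omega$ lexicographically strictly smaller than $t_1\cdots t_m0^\omega$ for $2\le i\le m$). $\varphi$ is the substitution on $\mathcal A=\{0,\dots,m-1\}$ with $\varphi(k)=0^{t_{k+1}}(k+1)$ for $0\le k\le m-2$, $\varphi(m-1)=0^{t_m}$, and $u_\beta=\lim_n\varphi^n(0)$ is its fixed point. A factor $w$ is left special if at least two distinct letters $a$ make $aw$ a factor of $u_\beta$; a left special factor $w$ is maximal if for no letter $a$ is $wa$ left special. *)

(* Defs.v *)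
From mathcomp Require Import all_boot.
Set Implicit Arguments. Unset Strict Implicit. Unset Printing Implicit Defensive.

(* Digits d_beta(1) = t_1 ... t_m are stored 0-based: t_{k+1} = nth 0 t k,
   m = size t.  Letters of the alphabet {0,...,m-1} are natural numbers. *)

Definition lex_lt (f g : nat -> nat) : Prop :=
  exists k, (forall j, j < k -> f j = g j) /\ f k < g k.

(* Parry condition: for 2 <= i <= m, t_i...t_m 0^omega <lex t_1...t_m 0^omega *)
Definition parry_cond (t : seq nat) : Prop :=
  forall i, 2 <= i <= size t ->
    lex_lt (fun j => nth 0 (drop i.-1 t) j) (fun j => nth 0 t j).

Definition phi (t : seq nat) (k : nat) : seq nat :=
  if k.+2 <= size t then nseq (nth 0 t k) 0 ++ [:: k.+1]
  else nseq (nth 0 t k) 0.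

Definition phi_word (t : seq nat) (w : seq nat) : seq nat :=
  flatten (map (phi t) w).

(* u_beta = lim phi^n(0); its n-th letter (0-based) is read off phi^{n+1}(0),
   which has length > n since t_1 >= 1 and all images are nonempty when t_m >= 1 *)
Definition u_beta (t : seq nat) (n : nat) : nat :=
  nth 0 (iter n.+1 (phi_word t) [:: 0]) n.

Definition factor (t : seq nat) (w : seq nat) : Prop :=
  exists i, w = mkseq (fun j => u_beta t (i + j)) (size w).

Definition left_special (t : seq nat) (w : seq nat) : Prop :=
  exists a b, a <> b /\ factor t (a :: w) /\ factor t (b :: w).

Definition maximal_left_special (t : seq nat) (w : seq nat) : Prop :=
  left_special t w /\ forall a, ~ left_special t (rcons w a).

(* Main.v *)
Require Import Defs.
From mathcomp Require Import all_boot.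
From mathcomp Require Import zify.
Set Implicit Arguments. Unset Strict Implicit. Unset Printing Implicit Defensive.

Section L6.
Variable t : seq nat.
Hypothesis Hm : 2 <= size t.
Hypothesis Ht1 : 1 <= nth 0 t 0.
Hypothesis Hpar : parry_cond t.
Hypothesis Hlast : last 0 t = 1.

Local Notation M := (size t).-1.
Local Notation t1 := (nth 0 t 0).
Local Notation ph := (phi t).
Local Notation pw := (phi_word t).
Local Notation al := (all (fun x => x < size t)).

Lemma tle i : nth 0 t i <= t1.
Proof.
case: (ltnP i (size t)) => Hi; last by rewrite nth_default.
case: i Hi => [|i] Hi; first by [].
have [|k [Hk1 Hk2]] := Hpar (i := i.+2); first by apply/andP; split => //.
case: k Hk1 Hk2 => [|k] Hk1 Hk2.
  by move: Hk2; rewrite nth_drop addn0 /= => /ltnW.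
by have := Hk1 0 isT; rewrite nth_drop addn0 /= => ->.
Qed.

Lemma pw_cat a b : pw (a ++ b) = pw a ++ pw b.
Proof. by rewrite /phi_word map_cat flatten_cat. Qed.
Lemma pw_cons a s : pw (a :: s) = ph a ++ pw s.
Proof. by []. Qed.

Lemma nthM : nth 0 t M = 1.
Proof. by rewrite -Hlast nth_last. Qed.

Lemma phi0 : ph 0 = nseq t1 0 ++ [:: 1].
Proof. by rewrite /phi Hm. Qed.
Lemma phiM : ph M = [:: 0].
Proof. rewrite /phi ifF ?nthM //; apply/negbTE; rewrite -ltnNge; lia. Qed.
Lemma phi_lt a : a < M -> ph a = nseq (nth 0 t a) 0 ++ [:: a.+1].
Proof. move=> H; rewrite /phi ifT //; lia. Qed.

Lemma phi_form a : a < size t -> exists n k, ph a = nseq n 0 ++ [:: k] /\ n <= t1 /\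
  ((a < M /\ n = nth 0 t a /\ k = a.+1) \/ (a = M /\ n = 0 /\ k = 0)).
Proof.
move=> Ha; case: (ltnP a M) => H.
  by exists (nth 0 t a), a.+1; rewrite phi_lt // tle; split=> //; split=> //; left.
have E : a = M by lia.
by exists 0, 0; rewrite E phiM; split=> //; split=> //; right.
Qed.

Lemma all_phi a : a < size t -> al (ph a).
Proof.
move=> /phi_form [n [k [-> [_ [[H1 [_ ->]]|[_ [_ ->]]]]]]];
  apply/allP => x; rewrite mem_cat mem_nseq inE => /orP [/andP [_ /eqP ->]|/eqP ->]; lia.
Qed.

Lemma all_pw s : al s -> al (pw s).
Proof.
elim: s => [//|a s IH] /= /andP [Ha Hs]; rewrite all_cat all_phi //; exact: IH.
Qed.

Lemma size_pw s : al s -> size s <= size (pw s).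
Proof.
elim: s => [//|a s IH] /andP [Ha Hs]; rewrite pw_cons size_cat.
have [n [k [-> _]]] := phi_form Ha; rewrite size_cat size_nseq.
have := IH Hs; rewrite [size (a :: s)]/= [size [:: k]]/=; lia.
Qed.

Definition P n := iter n pw [:: 0].
Lemma PS n : P n.+1 = pw (P n). Proof. by []. Qed.

Lemma P_all n : al (P n).
Proof. elim: n => [/=|n IH]; first lia. exact: all_pw. Qed.

Lemma P_pref n : prefix (P n) (P n.+1).
Proof.
elim: n => [|n IH].
  rewrite /P [iter 1 _ _]/= pw_cons cats0 phi0; case: (nth 0 t 0) Ht1 => [//|n _] /=.
  exact: prefix0s.
move/prefixP: IH => [s Hs]; apply/prefixP; exists (pw s).
by rewrite PS {1}Hs pw_cat -PS.
Qed.

Lemma P_pref_le n N : n <= N -> prefix (P n) (P N).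
Proof.
elim: N => [|N IH]; first by rewrite leqn0 => /eqP ->; exact: prefix_refl.
rewrite leq_eqVlt => /orP [/eqP ->|H]; first exact: prefix_refl.
exact: prefix_trans (IH H) (P_pref N).
Qed.

Lemma P_head n : exists s, P n = 0 :: s.
Proof. by have /prefixP [s ->] := P_pref_le (leq0n n); exists s. Qed.

Lemma P_size n : n < size (P n).
Proof.
elim: n => [//|n IH].
have [s Hs] := P_head n.
have Hal := P_all n; rewrite Hs /= in Hal; move/andP: Hal => [_ Hal].
rewrite PS Hs pw_cons size_cat phi0 size_cat size_nseq /=.
have := size_pw Hal; move: IH; rewrite Hs /=; lia.
Qed.

Lemma pref_nth (s1 s2 : seq nat) k : prefix s1 s2 -> k < size s1 -> nth 0 s2 k = nth 0 s1 k.
Proof. by move=> /prefixP [s ->] Hk; rewrite nth_cat Hk. Qed.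

Lemma P_nth N k : k < size (P N) -> nth 0 (P N) k = u_beta t k.
Proof.
move=> Hk; rewrite /u_beta -/(P k.+1).
rewrite -(pref_nth (P_pref_le (leq_maxl N k.+1)) Hk).
rewrite (pref_nth (P_pref_le (leq_maxr N k.+1))) //.
have := P_size k.+1; lia.
Qed.

Definition fac w := exists N, infix w (P N).

Lemma factor_fac w : factor t w <-> fac w.
Proof.
split.
  move=> [i Hw]; exists (i + size w).
  have Hs := P_size (i + size w).
  set n := size w in Hw Hs *.
  apply/infixP; exists (take i (P (i + n))), (drop n (drop i (P (i + n)))).
  have Hn : size w = n by [].
  suff -> : w = take n (drop i (P (i + n))) by rewrite !cat_take_drop.
  apply: (@eq_from_nth _ 0).
    rewrite size_take size_drop Hn; case: ifP => //; lia.
  move=> j Hj; rewrite Hn in Hj; rewrite nth_take // nth_drop P_nth; last lia.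
  by rewrite {1}Hw nth_mkseq.
move=> [N /infixP [s [s' HN]]]; exists (size s).
apply: (@eq_from_nth _ 0); first by rewrite size_mkseq.
move=> j Hj; rewrite nth_mkseq // -(@P_nth N); last first.
  by rewrite HN !size_cat ltn_add2l ltn_addr.
rewrite HN nth_cat ltnNge leq_addr /= addKn nth_cat Hj //.
Qed.

Lemma fac_infix w w' : fac w -> infix w' w -> fac w'.
Proof. move=> [N H] H'; exists N; exact: infix_trans H' H. Qed.
Lemma fac_pw w : fac w -> fac (pw w).
Proof.
move=> [N /infixP [s [s' H]]]; exists N.+1; apply/infixP; exists (pw s), (pw s').
by rewrite PS H !pw_cat.
Qed.
Lemma fac_all w : fac w -> al w.
Proof.
move=> [N /infixP [s [s' H]]]; have := P_all N; rewrite H !all_cat.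
by case/and3P.
Qed.
Lemma fac_S w : fac w -> exists N, infix w (pw (P N)).
Proof. move=> [N H]; exists N; rewrite -PS; exact: infix_trans H (prefixW (P_pref N)). Qed.

Lemma prefix_cat_cases (w s1 s2 : seq nat) : prefix w (s1 ++ s2) ->
  prefix w s1 \/ exists w2, w = s1 ++ w2 /\ prefix w2 s2.
Proof.
elim: s1 w => [|x s1 IH] w /=; first by move=> H; right; exists w.
case: w => [|y w]; first by left.
rewrite /= => /andP [/eqP -> H].
case: (IH _ H) => [H1|[w2 [-> H2]]]; [left; rewrite /= eqxx H1 // | right; exists w2 => //].
Qed.

Lemma infix_cat_cases (w s1 s2 : seq nat) : infix w (s1 ++ s2) ->
  infix w s1 \/ infix w s2 \/ exists w1 w2 p, w = w1 ++ w2 /\ w1 != [::] /\ w2 != [::]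
     /\ s1 = p ++ w1 /\ prefix w2 s2.
Proof.
elim: s1 => [|x s1 IH]; first by right; left.
rewrite cat_cons infix_consl => /orP [H|H].
  case: (prefix_cat_cases (s1:=x::s1) H) => [H1|[w2 [E H2]]].
    left; exact: prefixW.
  case: (eqVneq w2 [::]) => Hw2.
    left; rewrite E Hw2 cats0; exact: infix_refl.
  by right; right; exists (x :: s1), w2, [::].
case: (IH H) => [H1|[H1|[w1 [w2 [p [E [? [? [E2 H2]]]]]]]]].
- left; exact: infix_trans H1 (infix_cons _ _).
- by right; left.
- by right; right; exists w1, w2, (x :: p); rewrite E2.
Qed.

Lemma nth_nk n k i : nth 0 (nseq n 0 ++ [:: k]) i = if i == n then k else 0.
Proof.
rewrite nth_cat size_nseq nth_nseq if_same; case: ltnP => H.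
  by rewrite ifF //; apply/negbTE; rewrite neq_ltn H.
case: eqP => [->|Hne]; first by rewrite subnn.
rewrite nth_default //=; lia.
Qed.

Lemma in_nk n k (w : seq nat) : infix w (nseq n 0 ++ [:: k]) -> exists i, i + size w <= n.+1 /\
  forall j, j < size w -> nth 0 w j = (if i + j == n then k else 0).
Proof.
move/infixP => [p [q E]]; exists (size p); split.
  have := congr1 size E; rewrite !size_cat size_nseq /= => Es.
  by rewrite -addn1 Es addnA leq_addr.
move=> j Hj; rewrite -nth_nk E nth_cat ltnNge leq_addr /= addKn nth_cat Hj //.
Qed.

Lemma infix_lift (w v : seq nat) c : infix w v -> infix w (c :: v).
Proof. move=> H; exact: infix_trans H (infix_cons _ _). Qed.

Lemma two_split (a b : nat) w1 w2 : [:: a; b] = w1 ++ w2 -> w1 != [::] -> w2 != [::] ->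
  w1 = [:: a] /\ w2 = [:: b].
Proof.
case: w1 => [|x [|y w1]] //=; first by case=> -> ->.
by case=> _ _; case: w1 => //; case: w2.
Qed.

Lemma last_app (p : seq nat) a : last 0 (p ++ [:: a]) = a.
Proof. by rewrite cats1 last_rcons. Qed.

Lemma D2 v : al v -> forall a b, infix [:: a; b] (pw v) -> b != 0 ->
  (0 < nth 0 t b.-1 /\ a = 0) \/
  (nth 0 t b.-1 = 0 /\ exists c, infix [:: c; b.-1] v /\ b.-1 < M /\ a = last 0 (ph c)).
Proof.
elim: v => [|c v IH] Hal a b.
  by move/size_infix.
case/andP: Hal => Hc Hal.
rewrite pw_cons => /infix_cat_cases [H|[H|[w1 [w2 [p [E [Hw1 [Hw2 [Ep Hpr]]]]]]]]] Hb.
- have [n [k [Ephi [Hn Hcase]]]] := phi_form Hc.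
  rewrite Ephi in H; have [i [Hi Hj]] := in_nk H.
  have Hb' := Hj 1 isT; have Ha' := Hj 0 isT; rewrite /= in Hb' Ha'.
  have [Hin|Hin] := eqVneq (i + 1) n; last by rewrite Hb' ifF in Hb; [|apply/negbTE].
  rewrite Hin eqxx in Hb'.
  have Hne : (i + 0 == n) = false by apply/eqP; lia.
  rewrite Hne in Ha'; rewrite Ha'; left; split=> //.
  case: Hcase => [[Hc' [En Ek]]|[_ [_ Ek]]]; last by rewrite Hb' Ek in Hb.
  by rewrite Hb' Ek /= -En; lia.
- case: (IH Hal a b H Hb) => [//|[]]; first by left.
  move=> H1 [c' [H2 [H3 H4]]]; right; split=> //; exists c'; split=> //.
  exact: infix_lift.
- have [E1 E2] := two_split E Hw1 Hw2; subst w1 w2.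
  case: v Hal Hpr IH => [|d v] Hal Hpr _; first by [].
  case/andP: Hal => Hd _.
  rewrite pw_cons in Hpr.
  have [n [k [Ephi [Hn Hcase]]]] := phi_form Hd.
  rewrite Ephi in Hpr; case: n Ephi Hn Hcase Hpr => [|n] Ephi Hn Hcase Hpr; last first.
    by move: Hpr; rewrite /= => /andP [/eqP Hb0]; rewrite Hb0 in Hb.
  move: Hpr; rewrite /= => /andP [/eqP Hbk _].
  case: Hcase => [[Hd' [Hn0 Ek]]|[_ [_ Ek]]]; last by rewrite Hbk Ek in Hb.
  right; rewrite Hbk Ek /=; split=> //; exists c; split=> //.
    by rewrite !eqxx prefix0s.
  by split=> //; rewrite Ep last_app.
Qed.

Lemma last_phi c : c < size t -> last 0 (ph c) != 0 -> c < M /\ last 0 (ph c) = c.+1.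
Proof.
move=> /phi_form [n [k [-> [_ [[H1 [_ ->]]|[_ [_ ->]]]]]]]; rewrite last_app //.

Qed.

Lemma last_zero (p w : seq nat) : w != [::] -> all (pred1 0) w -> last 0 (p ++ w) = 0.
Proof.
case: w => // x w _ H; rewrite last_cat /=.
by move/allP: H => H; have /H /eqP := mem_last x w.
Qed.

Lemma zpref v : al v -> prefix (nseq t1.+1 0) (pw v) -> exists v', v = M :: v'.
Proof.
case: v => [|d v] //; case/andP => Hd _ Hp.
have [n [k [Ephi [Hn [[H1 [_ Ek]]|[-> _]]]]]] := phi_form Hd; last by exists v.
have := pref_nth Hp (k := n); rewrite size_nseq pw_cons Ephi -catA nth_cat size_nseq.
rewrite ltnn subnn /=.
have -> : nth 0 (0 :: nseq t1 0) n = 0.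
  by rewrite -[0 :: _]/(nseq t1.+1 0) nth_nseq if_same.
by rewrite ltnS Hn Ek => /(_ isT).
Qed.

Lemma noMM v : al v -> ~~ infix [:: M; M] v -> ~ infix (nseq t1.+2 0) (pw v).
Proof.
elim: v => [|c v IH] Hal HMM; first by move/size_infix; rewrite size_nseq.
case/andP: Hal => Hc Hal.
rewrite pw_cons => /infix_cat_cases [H|[H|[w1 [w2 [p [E [Hw1 [Hw2 [Ep Hpr]]]]]]]]].
- have [n [k [Ephi [Hn Hcase]]]] := phi_form Hc.
  rewrite Ephi in H; have [i [Hi _]] := in_nk H.
  move: Hi; rewrite size_nseq; lia.
- apply: IH H => //; apply: contra HMM; exact: infix_lift.
- have Hz : all (pred1 0) (w1 ++ w2) by rewrite -E all_pred1_nseq.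
  rewrite all_cat in Hz; case/andP: Hz => Hz1 Hz2.
  have L0 : last 0 (ph c) = 0 by rewrite Ep last_zero.
  have [n [k [Ephi [Hn [[H1 [_ Ek]]|[Ec _]]]]]] := phi_form Hc.
    by move: L0; rewrite Ephi last_app Ek.
  have Hs1 : size w1 = 1.
    have := congr1 size Ep; rewrite Ec phiM size_cat /=.
    by case: w1 Hw1 {E Hz1 Ep} => // x [|y w1] //= _; rewrite !addnS.
  have Hs2 : size w2 = t1.+1.
    by have := congr1 size E; rewrite size_nseq size_cat Hs1 add1n => -[].
  move/all_pred1P: Hz2; rewrite Hs2 => Ew2; rewrite Ew2 in Hpr.
  have [v' Ev] := zpref Hal Hpr.
  by move: HMM; rewrite Ev Ec infix_consl /= !eqxx prefix0s.
Qed.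

Lemma B_lem v : al v -> forall x, x != 0 -> infix (x :: nseq t1.+1 0) (pw v) ->
  exists c, infix [:: c; M] v /\ x = last 0 (ph c).
Proof.
elim: v => [|c v IH] Hal x Hx; first by move/size_infix.
case/andP: Hal => Hc Hal.
rewrite pw_cons => /infix_cat_cases [H|[H|[w1 [w2 [p [E [Hw1 [Hw2 [Ep Hpr]]]]]]]]].
- have [n [k [Ephi [Hn Hcase]]]] := phi_form Hc.
  rewrite Ephi in H; have [i [Hi _]] := in_nk H.
  move: Hi; rewrite /= size_nseq; lia.
- have [c' [H1 H2]] := IH Hal x Hx H; exists c'; split=> //; exact: infix_lift.
- case: w1 E Hw1 Ep => [//|y w1] /= [Exy E] _ Ep.
  subst y.
  have Hz : all (pred1 0) (w1 ++ w2) by rewrite -E; exact: (all_pred1_nseq 0 t1.+1).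
  rewrite all_cat in Hz; case/andP: Hz => Hz1 Hz2.
  have Ew1 : w1 = [::].
    case: (eqVneq w1 [::]) => // Hw1.
    have L0 : last 0 (ph c) = 0 by rewrite Ep -cat_rcons last_zero.
    have [n [k [Ephi [Hn [[H1 [_ Ek]]|[Ec _]]]]]] := phi_form Hc.
      by move: L0; rewrite Ephi last_app Ek.
    have := congr1 size Ep; rewrite Ec phiM size_cat /=.
    by case: w1 Hw1 {E Hz1 Ep} => // z w1 _ /=; rewrite !addnS.
  subst w1; rewrite /= in E; rewrite -E in Hpr.
  have [v' Ev] := zpref Hal Hpr.
  exists c; split; first by rewrite Ev infix_consl /= !eqxx prefix0s.
  by rewrite Ep last_app.
Qed.

Lemma noJJ j : 0 < j <= M -> ~ fac [:: j; j].
Proof.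
elim: j => [//|d IH] Hj Hf.
have [N HN] := fac_S Hf.
case: (D2 (P_all N) HN isT) => [[_ //]|[Hd [c [Hc [HdM Hl]]]]].
rewrite /= in Hd Hc HdM.
have Hd0 : 0 < d by case: d {IH Hj Hf HN Hc HdM Hl} Hd => //= H; have := Ht1; rewrite H.
have Hcs : c < size t.
  by have /infixP [s [s' HPs]] := Hc; have := P_all N; rewrite HPs !all_cat /= => /and3P [_ /andP [] ].
have Hl0 : last 0 (ph c) != 0 by rewrite -Hl.
have [_ Hl2] := last_phi Hcs Hl0.
rewrite -Hl in Hl2; case: Hl2 => Ecd; subst c.
apply: IH; first by apply/andP; split; lia.
by exists N.
Qed.

Lemma predM j : 0 < j <= M -> forall a b, fac [:: a; j] -> fac [:: b; j] -> a = b.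
Proof.
elim: j => [//|d IH] Hj a b Ha Hb.
have [N HN] := fac_S Ha; have [N' HN'] := fac_S Hb.
case: (D2 (P_all N) HN isT) => [[H1 ->]|[H1 [c [Hc [_ ->]]]]];
case: (D2 (P_all N') HN' isT) => [[H2 ->]|[H2 [c' [Hc' [_ ->]]]]] //=;
  rewrite /= in H1 H2; try by [rewrite H1 in H2 | rewrite H2 in H1].
have Hd0 : 0 < d by case: d {IH Hj Ha Hb HN HN' Hc Hc'} H1 H2 => //= H; have := Ht1; rewrite H.
have -> // : c = c'.
apply: IH; [apply/andP; split; lia | by exists N | by exists N'].
Qed.

Lemma pw2 a b : pw [:: a; b] = ph a ++ ph b.
Proof. by rewrite pw_cons pw_cons cats0. Qed.

Lemma E1 j : 0 < j <= M -> exists c, fac [:: c; j].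
Proof.
elim: j => [//|d IH] Hj.
case: d IH Hj => [|d] IH Hj.
  exists 0, 1; rewrite PS; have -> : P 0 = [:: 0] by [].
  rewrite pw_cons cats0 phi0; case: (nth 0 t 0) Ht1 => [//|n] _.
  have -> : nseq n.+1 0 ++ [:: 1] = nseq n 0 ++ [:: 0; 1] ++ [::].
    by rewrite cats0 -addn1 nseqD -catA.
  exact: infix_infix.
have [|c Hc] := IH; first by apply/andP; split=> //; case/andP: Hj => _; lia.
have Hcs : c < size t by have := fac_all Hc => /andP [].
have F := fac_pw Hc; rewrite pw2 (@phi_lt d.+1) in F; last by case/andP: Hj; lia.
case En: (nth 0 t d.+1) F => [|n] F.
  have [n' [k [Ephi _]]] := phi_form Hcs.
  exists k; apply: fac_infix F _; rewrite Ephi /=.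
  by apply/infixP; exists (nseq n' 0), [::]; rewrite -catA.
exists 0; apply: fac_infix F _.
apply/infixP; exists (ph c ++ nseq n 0), [::].
by rewrite -[n.+1]addn1 nseqD cats0 -!catA.
Qed.

Lemma E2 e k : k + e = M -> fac [:: k; 0] -> fac [:: M; 0].
Proof.
elim: e k => [|e IH] k Hk H; first by rewrite -Hk addn0.
apply: (IH k.+1); first by rewrite addSnnS.
have F := fac_pw H; rewrite pw2 phi_lt ?phi0 in F; last lia.
apply: fac_infix F _.
case: (nth 0 t 0) Ht1 => [//|n] _.
by apply/infixP; exists (nseq (nth 0 t k) 0), (nseq n 0 ++ [:: 1]); rewrite -catA.
Qed.

Lemma F1 : fac (nseq t1.+1 0 ++ [:: 1]).
Proof.
have [|c Hc] := E1 (j := M); first by apply/andP; split=> //; lia.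
have Hcs : c < size t by have := fac_all Hc => /andP [].
have F := fac_pw Hc; rewrite pw2 phiM in F.
have [n [k [Ephi _]]] := phi_form Hcs.
have Hk : fac [:: k; 0].
  apply: fac_infix F _; apply/infixP; exists (nseq n 0), [::].
  by rewrite Ephi -catA.
have Hks : k < size t by have := fac_all Hk => /andP [].
have HM := E2 (e := M - k) (k := k) ltac:(lia) Hk.
by have := fac_pw HM; rewrite pw2 phiM phi0.
Qed.

Lemma F2 : fac (1 :: nseq t1 0 ++ [:: 1]).
Proof.
have H00 : fac [:: 0; 0].
  apply: fac_infix F1 _; apply/infixP; exists [::], (nseq t1.-1 0 ++ [:: 1]).
  by case: (nth 0 t 0) Ht1.
have := fac_pw H00; rewrite pw2 phi0 => F; apply: fac_infix F _.
by apply/infixP; exists (nseq t1 0), [::]; rewrite cats0 -catA.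
Qed.

Lemma main w : maximal_left_special t w -> has (fun a => a != 0) w.
Proof.
move=> [[a [b [Hab [Ha Hb]]]] Hmax].
case Hh: (has _ w) => //; exfalso.
have Ew : w = nseq (size w) 0.
  apply/all_pred1P/allP => x Hx.
  by move/hasPn: (negbT Hh) => /(_ x Hx); rewrite negbK.
move: (size w) Ew => k Ew; subst w.
move/factor_fac: Ha => Ha; move/factor_fac: Hb => Hb.
have noZ : ~ fac (nseq t1.+2 0).
  move=> H; have [N HN] := fac_S H.
  apply: (noMM (P_all N) _ HN); apply/negP => HM.
  apply: (noJJ (j := M)); [by apply/andP; split=> //; lia | by exists N].
case: (ltnP t1.+1 k) => Hk.
  apply: noZ; apply: fac_infix Ha _.
  rewrite -(subnKC Hk) nseqD.
  exact: infix_trans (prefix_infix _ _) (infix_cons _ _).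
case: (ltnP k t1.+1) => Hk2.
  exfalso; apply: (Hmax (if k < t1 then 0 else 1)); exists 0, 1; split=> //.
  have Hr : forall x, rcons (nseq k 0) x = nseq k 0 ++ [:: x] by move=> x; rewrite cats1.
  split; apply/factor_fac; case: ltnP => Hkt.
  - apply: fac_infix F1 _; rewrite Hr.
    have -> : 0 :: nseq k 0 ++ [:: 0] = nseq k.+2 0 by rewrite -[k.+2]addn1 nseqD.
    rewrite -(subnKC (Hkt : k.+2 <= t1.+1)) nseqD -catA; exact: prefix_infix.
  - have -> : k = t1 by lia.
    by rewrite -cats1; exact: F1.
  - apply: fac_infix F2 _; rewrite Hr.
    have -> : 1 :: nseq k 0 ++ [:: 0] = 1 :: nseq k.+1 0 by rewrite -[k.+1]addn1 nseqD.
    rewrite -(subnKC (Hkt : k.+1 <= t1)) nseqD -catA -cat_cons; exact: prefix_infix.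
  - have -> : k = t1 by lia.
    by rewrite -cats1; exact: F2.
have Ek : k = t1.+1 by lia.
subst k.
have Ha0 : a != 0 by apply/negP => /eqP Ea; apply: noZ; rewrite Ea in Ha.
have Hb0 : b != 0 by apply/negP => /eqP Eb; apply: noZ; rewrite Eb in Hb.
have [N HN] := fac_S Ha; have [N' HN'] := fac_S Hb.
have [c [Hc Ea]] := B_lem (P_all N) Ha0 HN.
have [c' [Hc' Eb]] := B_lem (P_all N') Hb0 HN'.
apply: Hab; rewrite Ea Eb; congr (last 0 (ph _)).
apply: (predM (j := M)); [by apply/andP; split=> //; lia | by exists N | by exists N'].
Qed.
End L6.

Theorem lemma6 (t : seq nat) :
  2 <= size t -> 1 <= nth 0 t 0 -> parry_cond t -> last 0 t = 1 ->
  forall w : seq nat, maximal_left_special t w -> has (fun a => a != 0) w.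
Proof.
move=> Hm Ht1 Hpar Hlast w Hw.
exact: (main Hm Ht1 Hpar Hlast Hw).
Qed.
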